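(* Let $f\colon X\to Y$ be a perfect map between metrizable spaces, $d$ a compatible metric on $X$, $(M,\varrho)$ a complete metric space, $m,n\ge1$, $g_0\in C(X,M)$ and $\varepsilon\colon X\to(0,1/64]$ continuous. Equip $C(X,M)$ with the compact-open topology and define $\Phi_\varepsilon(y)=\mathcal{K}(m,n,y)\cap B_\varrho(g_0,\varepsilon)$ for $y\in Y$. If $y_0\in Y$ and $K\subset\Phi_\varepsilon(y_0)$ is compact, then there is a neighborhood $V(y_0)$ of $y_0$ in $Y$ such that $K\subset\Phi_\varepsilon(y)$ for every $y\in V(y_0)$.
   Context: $B_\varrho(g_0,\varepsilon)=\{g\in C(X,M):\varrho(g(x),g_0(x))<\varepsilon(x)\ \forall x\in X\}$. For $A\subset X$, $B(A,\delta)=\{x:d(x,A)<\delta\}$. $C(x,g|f^{-1}(y))$ is the component of $g^{-1}(g(x))\cap f^{-1}(y)$ containing $x$. $\mathcal{K}(m,n,y)$ is the set of $g\in C(X,M)$ such that for every subcontinuum $L\subset f^{-1}(y)$ with $\operatorname{diam}g(L)\ge1/n$ there is $x\in L$ with $C(x,g|f^{-1}(y))\subset B(L,1/m)$. *)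

(* Defs.v *)
From Stdlib Require Import Reals List.
Open Scope R_scope.

Section Metric.
Context {T : Type}.

Definition is_metric (d : T -> T -> R) : Prop :=
  (forall x y, 0 <= d x y) /\ (forall x y, d x y = 0 <-> x = y) /\
  (forall x y, d x y = d y x) /\ (forall x y z, d x z <= d x y + d y z).

Definition complete_metric (d : T -> T -> R) : Prop :=
  forall u : nat -> T,
    (forall e, 0 < e -> exists N, forall p q, (N <= p)%nat -> (N <= q)%nat -> d (u p) (u q) < e) ->
    exists l, forall e, 0 < e -> exists N, forall p, (N <= p)%nat -> d (u p) l < e.

Definition open_in (d : T -> T -> R) (U : T -> Prop) : Prop :=
  forall x, U x -> exists r, 0 < r /\ forall z, d x z < r -> U z.

Definition closed_in (d : T -> T -> R) (F : T -> Prop) : Prop :=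
  open_in d (fun x => ~ F x).

Definition compact_in (d : T -> T -> R) (C : T -> Prop) : Prop :=
  forall (I : Type) (U : I -> T -> Prop), (forall i, open_in d (U i)) ->
    (forall x, C x -> exists i, U i x) ->
    exists l : list I, forall x, C x -> exists i, In i l /\ U i x.

Definition connected_in (d : T -> T -> R) (S : T -> Prop) : Prop :=
  forall U V, open_in d U -> open_in d V ->
    (forall x, S x -> U x \/ V x) -> (forall x, ~ (S x /\ U x /\ V x)) ->
    (forall x, ~ (S x /\ U x)) \/ (forall x, ~ (S x /\ V x)).

Definition continuum_in (d : T -> T -> R) (S : T -> Prop) : Prop :=
  (exists x, S x) /\ compact_in d S /\ connected_in d S.

Definition component_in (d : T -> T -> R) (S : T -> Prop) (x z : T) : Prop :=
  exists A, (forall w, A w -> S w) /\ connected_in d A /\ A x /\ A z.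

Definition nbhd_set (d : T -> T -> R) (A : T -> Prop) (del : R) (x : T) : Prop :=
  exists a, A a /\ d x a < del.

End Metric.

Definition continuous_map {A B : Type} (dA : A -> A -> R) (dB : B -> B -> R)
  (h : A -> B) : Prop :=
  forall x e, 0 < e -> exists del, 0 < del /\ forall z, dA x z < del -> dB (h x) (h z) < e.

Definition perfect_map {X Y : Type} (dX : X -> X -> R) (dY : Y -> Y -> R)
  (f : X -> Y) : Prop :=
  continuous_map dX dY f /\
  (forall F, closed_in dX F -> closed_in dY (fun y => exists x, F x /\ f x = y)) /\
  (forall y, compact_in dX (fun x => f x = y)).

(* diam g(L) >= r, i.e. sup { rho(g a, g b) : a, b in L } >= r *)
Definition diam_ge {X M : Type} (rho : M -> M -> R) (g : X -> M) (L : X -> Prop) (r : R) : Prop :=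
  forall r', r' < r -> exists a b, L a /\ L b /\ r' < rho (g a) (g b).

(* C(x, g|f^{-1}(y)) : component of g^{-1}(g(x)) ∩ f^{-1}(y) containing x *)
Definition Ccomp {X Y M : Type} (d : X -> X -> R) (f : X -> Y) (g : X -> M)
  (y : Y) (x : X) : X -> Prop :=
  component_in d (fun z => g z = g x /\ f z = y) x.

Definition Kset {X Y M : Type} (d : X -> X -> R) (rho : M -> M -> R) (f : X -> Y)
  (m n : nat) (y : Y) (g : X -> M) : Prop :=
  continuous_map d rho g /\
  forall L, continuum_in d L -> (forall x, L x -> f x = y) ->
    diam_ge rho g L (1 / INR n) ->
    exists x, L x /\ forall z, Ccomp d f g y x z -> nbhd_set d L (1 / INR m) z.

Definition Bset {X M : Type} (d : X -> X -> R) (rho : M -> M -> R) (g0 : X -> M)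
  (eps : X -> R) (g : X -> M) : Prop :=
  continuous_map d rho g /\ forall x, rho (g x) (g0 x) < eps x.

Definition Phi {X Y M : Type} (d : X -> X -> R) (rho : M -> M -> R) (f : X -> Y)
  (m n : nat) (g0 : X -> M) (eps : X -> R) (y : Y) (g : X -> M) : Prop :=
  Kset d rho f m n y g /\ Bset d rho g0 eps g.

(* Open sets of C(X,M) in the compact-open topology: generated by the subbasic
   sets [C,U] = { g : g(C) ⊆ U }, C ⊆ X compact, U ⊆ M open. *)
Definition CO_open {X M : Type} (d : X -> X -> R) (rho : M -> M -> R)
  (W : (X -> M) -> Prop) : Prop :=
  forall g, continuous_map d rho g -> W g ->
    exists l : list ((X -> Prop) * (M -> Prop)),
      (forall p, In p l -> compact_in d (fst p) /\ open_in rho (snd p) /\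
                           forall x, fst p x -> snd p (g x)) /\
      forall h, continuous_map d rho h ->
        (forall p, In p l -> forall x, fst p x -> snd p (h x)) -> W h.

Definition CO_compact {X M : Type} (d : X -> X -> R) (rho : M -> M -> R)
  (K : (X -> M) -> Prop) : Prop :=
  (forall g, K g -> continuous_map d rho g) /\
  forall (I : Type) (W : I -> (X -> M) -> Prop), (forall i, CO_open d rho (W i)) ->
    (forall g, K g -> exists i, W i g) ->
    exists l : list I, forall g, K g -> exists i, In i l /\ W i g.

(* Main.v *)
Require Import Defs.
From Stdlib Require Import Reals List ZArith Lra Lia Classical IndefiniteDescription.
Open Scope R_scope.

Definition epn (j : nat) : R := / INR (S j).

Lemma epn_pos j : 0 < epn j.
Proof. unfold epn. apply Rinv_0_lt_compat, lt_0_INR; lia. Qed.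

Lemma epn_mono j k : (j <= k)%nat -> epn k <= epn j.
Proof.
  intros H. unfold epn. apply Rinv_le_contravar. apply lt_0_INR; lia.
  apply le_INR; lia.
Qed.

Lemma epn_small e : 0 < e -> exists j, epn j < e.
Proof.
  intros He. destruct (archimed (/ e)) as [H1 _].
  assert (0 < / e) by (apply Rinv_0_lt_compat; lra).
  destruct (INR_IZR_INZ (Z.to_nat (up (/ e)))) as [].
  exists (Z.to_nat (up (/ e))). unfold epn.
  assert (Hz : (0 <= up (/e))%Z) by (apply le_IZR; lra).
  assert (HI : INR (Z.to_nat (up (/ e))) = IZR (up (/e))).
  { rewrite INR_IZR_INZ, Z2Nat.id; auto. }
  rewrite S_INR, HI.
  replace e with (/ / e) at 2 by (field; lra).
  apply Rinv_lt_contravar. apply Rmult_lt_0_compat; lra. lra.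
Qed.

Definition inf (P : nat -> Prop) := forall N, exists k, (N <= k)%nat /\ P k.
Definition ev (P Q : nat -> Prop) := exists N, forall k, (N <= k)%nat -> P k -> Q k.
Definition fr (P Q : nat -> Prop) := forall N, exists k, (N <= k)%nat /\ P k /\ Q k.

Lemma ev_and P Q1 Q2 : ev P Q1 -> ev P Q2 -> ev P (fun k => Q1 k /\ Q2 k).
Proof.
  intros [N1 H1] [N2 H2]. exists (max N1 N2). intros k Hk Pk.
  split; [apply H1|apply H2]; auto; lia.
Qed.

Lemma ev_ge P N : ev P (fun k => (N <= k)%nat).
Proof. exists N. auto. Qed.

Lemma ev_fr P Q : inf P -> ev P Q -> fr P Q.
Proof.
  intros HP [N1 H1] N. destruct (HP (max N N1)) as [k [Hk Pk]].
  exists k. repeat split; auto. lia. apply H1; auto; lia.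
Qed.

Lemma fr_ev P Q Q' : fr P Q -> ev P Q' -> fr P (fun k => Q k /\ Q' k).
Proof.
  intros HF [N1 H1] N. destruct (HF (max N N1)) as [k [Hk [Pk Qk]]].
  exists k. repeat split; auto. lia. apply H1; auto; lia.
Qed.

Lemma ev_sub P Q R : (forall k, Q k -> P k) -> ev P R -> ev Q R.
Proof. intros H [N HN]. exists N. auto. Qed.

Lemma fr_sub P Q R : (forall k, Q k -> P k) -> fr Q R -> fr P R.
Proof. intros H HF N. destruct (HF N) as [k [? [? ?]]]. exists k; auto. Qed.

Lemma ev_impl P Q R : (forall k, P k -> Q k -> R k) -> ev P Q -> ev P R.
Proof. intros H [N HN]. exists N; auto. Qed.

Lemma fr_impl P Q R : (forall k, P k -> Q k -> R k) -> fr P Q -> fr P R.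
Proof. intros H HF N. destruct (HF N) as [k [? [? ?]]]. exists k; auto. Qed.

Lemma fr_inf P Q : fr P Q -> inf (fun k => P k /\ Q k).
Proof. intros H N. destruct (H N) as [k [? [? ?]]]. exists k; auto. Qed.

Lemma list_max {A : Type} (F : A -> nat) (l : list A) :
  exists N, forall c, In c l -> (F c <= N)%nat.
Proof.
  induction l as [|a l [N IH]]. exists 0%nat. intros c [].
  exists (max (F a) N). intros c [<-|Hc]. lia. specialize (IH c Hc). lia.
Qed.

Lemma extract (P : nat -> Prop) (R : nat -> nat -> Prop) :
  (forall j, fr P (R j)) -> (forall j k, R (S j) k -> R j k) ->
  exists Q, (forall k, Q k -> P k) /\ inf Q /\ forall j, ev Q (R j).
Proof.
  intros HF Hm.
  assert (Hc : forall p : nat * nat, exists k, (snd p <= k)%nat /\ P k /\ R (fst p) k).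
  { intros [j N]. apply HF. }
  destruct (functional_choice _ Hc) as [c Hc'].
  pose (phi := fix F (i : nat) : nat := match i with
     | O => c (O, O) | S i' => c (S i', S (F i')) end).
  assert (Hphi : forall i, P (phi i) /\ R i (phi i)).
  { intros [|i]; simpl. destruct (Hc' (O, O)) as [_ [? ?]]; simpl in *; auto.
    destruct (Hc' (S i, S (phi i))) as [_ [? ?]]; simpl in *; auto. }
  assert (Hinc : forall i, (S (phi i) <= phi (S i))%nat).
  { intros i. simpl. destruct (Hc' (S i, S (phi i))) as [? _]; simpl in *; auto. }
  assert (Hge : forall i, (i <= phi i)%nat).
  { induction i. lia. specialize (Hinc i). lia. }
  assert (Hmon : forall i i', (i < i')%nat -> (phi i < phi i')%nat).
  { intros i i' H. induction H. apply Hinc. specialize (Hinc m). lia. }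
  assert (HRm0 : forall j i x, (j <= i)%nat -> R i x -> R j x).
  { intros j i x H. induction H; auto. }
  assert (HRm : forall j i, (j <= i)%nat -> R i (phi i) -> R j (phi i)).
  { intros j i H. apply HRm0; auto. }
  exists (fun k => exists i, phi i = k). repeat split.
  - intros k [i <-]. apply Hphi.
  - intros N. exists (phi N). split; eauto.
  - intros j. exists (phi j). intros k Hk [i <-].
    apply HRm. destruct (le_lt_dec j i); auto. specialize (Hmon _ _ l). lia.
    apply Hphi.
Qed.

Section Met.
Context {X : Type} (d : X -> X -> R) (Hd : is_metric d).

Lemma d_nn x y : 0 <= d x y. Proof. apply Hd. Qed.
Lemma d_refl x : d x x = 0. Proof. apply Hd. auto. Qed.
Lemma d_sym x y : d x y = d y x. Proof. apply Hd. Qed.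
Lemma d_tri x y z : d x z <= d x y + d y z. Proof. apply Hd. Qed.

Lemma ball_open c r : open_in d (fun z => d c z < r).
Proof.
  intros z Hz. exists (r - d c z). split. lra.
  intros w Hw. pose proof (d_tri c z w). lra.
Qed.

Lemma compact_closed_sub C G : compact_in d C -> open_in d (fun z => ~ G z) ->
  compact_in d (fun z => C z /\ G z).
Proof.
  intros HC HG I U HU Hcov.
  set (U' := fun (o : option I) => match o with Some i => U i | None => fun z => ~ G z end).
  destruct (HC (option I) U') as [l' Hl'].
  - intros [i|]; simpl; auto.
  - intros x Cx. destruct (classic (G x)) as [Gx|nGx].
    + destruct (Hcov x (conj Cx Gx)) as [i Hi]. exists (Some i). exact Hi.
    + exists None. exact nGx.
  - exists (flat_map (fun o => match o with Some i => i :: nil | None => nil end) l').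
    intros x [Cx Gx]. destruct (Hl' x Cx) as [[i|] [Hin Hx]].
    + exists i. split; auto. apply in_flat_map. exists (Some i). simpl; auto.
    + simpl in Hx. tauto.
Qed.

Lemma compact_ext C C' : (forall z, C z <-> C' z) -> compact_in d C -> compact_in d C'.
Proof.
  intros He HC I U HU Hcov. destruct (HC I U HU) as [l Hl].
  - intros x Cx. apply Hcov, He, Cx.
  - exists l. intros x Cx. apply Hl, He, Cx.
Qed.

Lemma cluster Z P (u : nat -> X) : compact_in d Z -> inf P -> (forall k, P k -> Z (u k)) ->
  exists c, Z c /\ forall e, 0 < e -> fr P (fun k => d c (u k) < e).
Proof.
  intros HZ HP Hu. apply NNPP. intros Hn.
  assert (H : forall c, exists p : R * nat, Z c -> 0 < fst p /\
     forall k, (snd p <= k)%nat -> P k -> ~ d c (u k) < fst p).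
  { intros c. apply NNPP. intros Hc. apply Hn. exists c.
    assert (Zc : Z c). { apply NNPP. intros nZ. apply Hc. exists (1, O). tauto. }
    split; auto. intros e He N. apply NNPP. intros Hf. apply Hc. exists (e, N).
    intros _. split; auto. intros k Hk Pk Hd'. apply Hf. exists k. auto. }
  destruct (functional_choice _ H) as [F HF].
  destruct (HZ X (fun c z => Z c /\ d c z < fst (F c))) as [l Hl].
  - intros c z [Zc Hz]. destruct (ball_open c (fst (F c)) z Hz) as [r [Hr Hb]].
    exists r. split; auto.
  - intros x Zx. exists x. split; auto. rewrite d_refl. apply (HF x Zx).
  - destruct (list_max (fun c => snd (F c)) l) as [N HN].
    destruct (HP N) as [k [Hk Pk]]. destruct (Hl (u k) (Hu k Pk)) as [c [Hin [Zc Hc]]].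
    apply (proj2 (HF c Zc) k); auto. specialize (HN c Hin). lia.
Qed.

Lemma seq_conv Z P (u : nat -> X) : compact_in d Z -> inf P -> (forall k, P k -> Z (u k)) ->
  exists Q, (forall k, Q k -> P k) /\ inf Q /\ exists c, Z c /\
     forall e, 0 < e -> ev Q (fun k => d c (u k) < e).
Proof.
  intros HZ HP Hu. destruct (cluster Z P u HZ HP Hu) as [c [Zc Hc]].
  destruct (extract P (fun j k => d c (u k) < epn j)) as [Q [HQP [HQ HQR]]].
  - intros j. apply Hc, epn_pos.
  - intros j k H. pose proof (epn_mono j (S j) ltac:(lia)). lra.
  - exists Q. split; auto. split; auto. exists c. split; auto.
    intros e He. destruct (epn_small e He) as [j Hj]. eapply ev_impl; [|apply (HQR j)].
    simpl. intros. lra.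
Qed.

Definition meets (A : nat -> X -> Prop) (e : R) (w : X) (k : nat) :=
  exists a, A k a /\ d w a < e.
Definition lims (Q : nat -> Prop) (A : nat -> X -> Prop) (w : X) :=
  forall e, 0 < e -> fr Q (meets A e w).

Lemma meets_mono A e e' w k : e <= e' -> meets A e w k -> meets A e' w k.
Proof. intros H [a [? ?]]. exists a. split; auto. lra. Qed.

Lemma meets_shift A e w w' k : meets A e w k -> meets A (e + d w' w) w' k.
Proof. intros [a [? ?]]. exists a. split; auto. pose proof (d_tri w' w a). lra. Qed.

Lemma lims_closed Q A : open_in d (fun w => ~ lims Q A w).
Proof.
  intros w Hw. apply not_all_ex_not in Hw as [e He].
  apply imply_to_and in He as [He Hf].
  exists (e/2). split. lra. intros z Hz Hl. apply Hf.
  intros N. destruct (Hl (e/2) ltac:(lra) N) as [k [Hk [Qk Hm]]].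
  exists k. repeat split; auto. apply meets_shift with (w' := w) in Hm.
  eapply meets_mono; [|exact Hm]. lra.
Qed.

Lemma ev_lims Q A w : inf Q -> (forall e, 0 < e -> ev Q (meets A e w)) -> lims Q A w.
Proof. intros HQ H e He. apply ev_fr; auto. Qed.

Lemma choose_seq Q A (x : X) : (forall k, Q k -> exists a, A k a) ->
  (forall e, 0 < e -> ev Q (meets A e x)) ->
  exists s, (forall k, Q k -> A k (s k)) /\ forall e, 0 < e -> ev Q (fun k => d x (s k) < e).
Proof.
  intros Hne Hev.
  assert (HN : forall j, exists N, forall k, (N <= k)%nat -> Q k -> meets A (epn j) x k).
  { intros j. apply Hev, epn_pos. }
  destruct (functional_choice _ HN) as [N HN'].
  assert (Ht : forall k, Q k -> forall t, exists a, A k a /\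
     forall j, (j <= t)%nat -> (N j <= k)%nat -> d x a < epn j).
  { intros k Qk. induction t as [|t [a [Ha Hat]]].
    - destruct (le_lt_dec (N O) k) as [Hle|Hlt].
      + destruct (HN' O k Hle Qk) as [a [? ?]]. exists a. split; auto.
        intros j Hj _. replace j with O by lia. auto.
      + destruct (Hne k Qk) as [a Ha]. exists a. split; auto. intros j Hj Hj'.
        replace j with O in Hj' by lia. lia.
    - destruct (le_lt_dec (N (S t)) k) as [Hle|Hlt].
      + destruct (HN' (S t) k Hle Qk) as [b [? ?]]. exists b. split; auto.
        intros j Hj _. pose proof (epn_mono j (S t) Hj). lra.
      + exists a. split; auto. intros j Hj Hj'. destruct (Nat.eq_dec j (S t)).
        subst. lia. apply Hat; auto. lia. }
  assert (Hs : forall k, exists a, Q k -> A k a /\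
     forall j, (j <= k)%nat -> (N j <= k)%nat -> d x a < epn j).
  { intros k. destruct (classic (Q k)) as [Qk|nQ].
    - destruct (Ht k Qk k) as [a Ha]. exists a. auto.
    - exists x. tauto. }
  destruct (functional_choice _ Hs) as [s Hs']. exists s. split.
  - intros k Qk. apply Hs', Qk.
  - intros e He. destruct (epn_small e He) as [j Hj]. exists (max j (N j)).
    intros k Hk Qk. assert (d x (s k) < epn j). apply Hs'; auto; lia. lra.
Qed.

Lemma single_connected x : connected_in d (fun w => w = x).
Proof.
  intros U V HU HV Hcov Hdis. destruct (Hcov x eq_refl) as [Ux|Vx].
  - right. intros w [-> Vw]. apply (Hdis x). auto.
  - left. intros w [-> Uw]. apply (Hdis x). auto.
Qed.

Lemma comp_connected S x : connected_in d (fun w => component_in d S x w).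
Proof.
  intros U V HU HV Hcov Hdis. apply NNPP. intros Hn. apply not_or_and in Hn as [H1 H2].
  apply not_all_ex_not in H1 as [w1 H1]. apply not_all_ex_not in H2 as [w2 H2].
  apply NNPP in H1 as [[A1 [HA1S [HA1c [HA1x HA1w]]]] Uw1].
  apply NNPP in H2 as [[A2 [HA2S [HA2c [HA2x HA2w]]]] Vw2].
  assert (Cx : component_in d S x x). { exists A1. auto. }
  destruct (Hcov x Cx) as [Ux|Vx].
  - destruct (HA2c U V HU HV) as [Hn|Hn].
    + intros w Aw. apply Hcov. exists A2. auto.
    + intros w [Aw [Uw Vw]]. apply (Hdis w). split; auto. exists A2. auto.
    + apply (Hn x). auto.
    + apply (Hn w2). auto.
  - destruct (HA1c U V HU HV) as [Hn|Hn].
    + intros w Aw. apply Hcov. exists A1. auto.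
    + intros w [Aw [Uw Vw]]. apply (Hdis w). split; auto. exists A1. auto.
    + apply (Hn w1). auto.
    + apply (Hn x). auto.
Qed.

End Met.

Section Met2.
Context {X : Type} (d : X -> X -> R) (Hd : is_metric d).

Lemma lims_sep Z Q A : compact_in d Z -> inf Q -> (forall k, Q k -> forall w, A k w -> Z w) ->
  (forall k, Q k -> connected_in d (A k)) -> forall p, (forall e, 0 < e -> ev Q (meets d A e p)) ->
  forall U V, open_in d U -> open_in d V ->
  (forall x, lims d Q A x -> U x \/ V x) -> (forall x, ~ (lims d Q A x /\ U x /\ V x)) ->
  U p -> forall s2, lims d Q A s2 -> V s2 -> False.
Proof.
  intros HZ HQ HA Hc p Hp U V HU HV Hcov Hdis Up s2 Ss2 Vs2.
  set (S := lims d Q A) in *.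
  assert (Hr : forall a, exists r, S a /\ U a -> 0 < r /\ forall z, d a z < r -> U z).
  { intros a. destruct (classic (S a /\ U a)) as [[Sa Ua]|Hn].
    - destruct (HU a Ua) as [r0 Hr0]. exists r0. auto.
    - exists 1. tauto. }
  assert (Hs : forall a, exists r, S a /\ V a -> 0 < r /\ forall z, d a z < r -> V z).
  { intros a. destruct (classic (S a /\ V a)) as [[Sa Va]|Hn].
    - destruct (HV a Va) as [r0 Hr0]. exists r0. auto.
    - exists 1. tauto. }
  destruct (functional_choice _ Hr) as [r Hr'].
  destruct (functional_choice _ Hs) as [s Hs'].
  set (U' := fun w => exists a, S a /\ U a /\ d a w < r a / 2).
  set (V' := fun w => exists a, S a /\ V a /\ d a w < s a / 2).
  assert (HU' : open_in d U').
  { intros w [a [Sa [Ua Haw]]]. exists (r a / 2 - d a w). split. lra.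
    intros z Hz. exists a. repeat split; auto. pose proof (d_tri d Hd a w z). lra. }
  assert (HV' : open_in d V').
  { intros w [a [Sa [Ua Haw]]]. exists (s a / 2 - d a w). split. lra.
    intros z Hz. exists a. repeat split; auto. pose proof (d_tri d Hd a w z). lra. }
  assert (Hdj : forall w, U' w -> V' w -> False).
  { intros w [a [Sa [Ua Ha]]] [b [Sb [Vb Hb]]].
    pose proof (d_tri d Hd a w b). rewrite (d_sym d Hd w b) in H.
    destruct (Hr' a (conj Sa Ua)) as [ra0 Hra]. destruct (Hs' b (conj Sb Vb)) as [sb0 Hsb].
    destruct (Rle_lt_dec (s b) (r a)).
    - apply (Hdis b). repeat split; auto. apply Hra. lra.
    - apply (Hdis a). repeat split; auto. apply Hsb. rewrite d_sym by auto. lra. }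
  assert (HSc : forall w, S w -> U' w \/ V' w).
  { intros w Sw. destruct (Hcov w Sw) as [Uw|Vw].
    - left. exists w. repeat split; auto. rewrite d_refl by auto.
      destruct (Hr' w (conj Sw Uw)). lra.
    - right. exists w. repeat split; auto. rewrite d_refl by auto.
      destruct (Hs' w (conj Sw Vw)). lra. }
  assert (Sp : S p). { apply ev_lims; auto. }
  destruct (Hr' p (conj Sp Up)) as [rp _].
  destruct (Hs' s2 (conj Ss2 Vs2)) as [ss _].
  destruct (Hp (r p / 2) ltac:(lra)) as [N1 HN1].
  set (Q' := fun k => Q k /\ (N1 <= k)%nat /\ meets d A (s s2 / 2) s2 k).
  assert (HQ' : inf Q').
  { intros N. destruct (Ss2 (s s2 / 2) ltac:(lra) (max N N1)) as [k [Hk [Qk Hm]]].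
    exists k. split. lia. repeat split; auto. lia. }
  assert (Hw : forall k, exists w, Q' k -> A k w /\ ~ U' w /\ ~ V' w).
  { intros k. destruct (classic (Q' k)) as [[Qk [Hk Hm]]|nQ].
    - destruct (classic (exists w, A k w /\ ~ U' w /\ ~ V' w)) as [[w Hw]|Hnone].
      { exists w. auto. }
      exfalso.
      destruct (HN1 k Hk Qk) as [a [Aa Ha]]. destruct Hm as [b [Ab Hb]].
      destruct (Hc k Qk U' V' HU' HV') as [Hn|Hn].
      + intros w Aw. destruct (classic (U' w)); auto.
        destruct (classic (V' w)); auto. exfalso. apply Hnone. eauto.
      + intros w [_ [U'w V'w]]. eauto.
      + apply (Hn a). split; auto. exists p. repeat split; auto.
      + apply (Hn b). split; auto. exists s2. repeat split; auto.
    - exists p. tauto. }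
  destruct (functional_choice _ Hw) as [ws Hws].
  destruct (cluster d Hd Z Q' ws HZ HQ') as [c [Zc Hcl]].
  { intros k Qk. destruct (Hws k Qk) as [Aw _]. apply (HA k (proj1 Qk)); auto. }
  assert (Sc : S c).
  { intros e He. eapply fr_sub with (Q := Q'). intros k Hk; apply Hk.
    eapply fr_impl; [|apply (Hcl e He)]. intros k Qk Hk. exists (ws k).
    split; auto. apply (Hws k Qk). }
  assert (Hout : forall Op, open_in d Op -> (forall k, Q' k -> ~ Op (ws k)) -> ~ Op c).
  { intros Op HO Hn Oc. destruct (HO c Oc) as [t [Ht Hb]].
    destruct (Hcl t Ht 0%nat) as [k [_ [Qk Hk]]]. apply (Hn k Qk). auto. }
  destruct (HSc c Sc) as [Hc'|Hc'].
  - apply (Hout U' HU'); auto. intros k Qk. apply (Hws k Qk).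
  - apply (Hout V' HV'); auto. intros k Qk. apply (Hws k Qk).
Qed.

Lemma lims_connected Z Q A : compact_in d Z -> inf Q -> (forall k, Q k -> forall w, A k w -> Z w) ->
  (forall k, Q k -> connected_in d (A k)) -> forall p, (forall e, 0 < e -> ev Q (meets d A e p)) ->
  connected_in d (lims d Q A).
Proof.
  intros HZ HQ HA Hc p Hp U V HU HV Hcov Hdis.
  apply NNPP. intros Hn. apply not_or_and in Hn as [H1 H2].
  apply not_all_ex_not in H1 as [w1 H1]. apply not_all_ex_not in H2 as [w2 H2].
  apply NNPP in H1 as [S1 U1]. apply NNPP in H2 as [S2 V2].
  assert (Sp : lims d Q A p). { apply ev_lims; auto. }
  destruct (Hcov p Sp) as [Up|Vp].
  - exact (lims_sep Z Q A HZ HQ HA Hc p Hp U V HU HV Hcov Hdis Up w2 S2 V2).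
  - refine (lims_sep Z Q A HZ HQ HA Hc p Hp V U HV HU _ _ Vp w1 S1 U1).
    + intros x Sx. destruct (Hcov x Sx); auto.
    + intros x [Sx [Vx Ux]]. apply (Hdis x). auto.
Qed.

End Met2.

Section Met3.
Context {X : Type} (d : X -> X -> R) (Hd : is_metric d).

Lemma stab_list (T : X -> nat -> Prop) (l : list X) (P : nat -> Prop) : inf P ->
  exists P', (forall k, P' k -> P k) /\ inf P' /\
   forall c, In c l -> (forall k, P' k -> T c k) \/ (forall k, P' k -> ~ T c k).
Proof.
  intros HP. induction l as [|c l IH].
  - exists P. split; [auto|]. split; [auto|]. intros c [].
  - destruct IH as [P1 [H1 [HP1 Hs]]].
    destruct (classic (fr P1 (T c))) as [Hf|Hnf].
    + exists (fun k => P1 k /\ T c k). split. intros k [? ?]; auto.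
      split. apply fr_inf; auto.
      intros c' [<-|Hin]. left. intros k [? ?]; auto.
      destruct (Hs c' Hin) as [Ha|Ha]; [left|right]; intros k [? ?]; auto.
    + assert (HN : exists N, forall k, (N <= k)%nat -> P1 k -> ~ T c k).
      { apply NNPP. intros Hn. apply Hnf. intros N. apply NNPP. intros Hm. apply Hn.
        exists N. intros k Hk Pk Tk. apply Hm. exists k. auto. }
      destruct HN as [N HN].
      exists (fun k => P1 k /\ (N <= k)%nat). split. intros k [? ?]; auto.
      split. intros M. destruct (HP1 (max M N)) as [k [Hk Pk]]. exists k.
      split. lia. split; auto. lia.
      intros c' [<-|Hin]. right. intros k [? ?]; auto.
      destruct (Hs c' Hin) as [Ha|Ha]; [left|right]; intros k [? ?]; auto.
Qed.

Lemma kuratowski Z P A : compact_in d Z -> inf P -> (forall k, P k -> forall w, A k w -> Z w) ->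
  exists Q, (forall k, Q k -> P k) /\ inf Q /\
   forall w, lims d Q A w -> forall e, 0 < e -> ev Q (meets d A e w).
Proof.
  intros HZ HP HA.
  assert (Hnet : forall j, exists l : list X, forall z, Z z -> exists c, In c l /\ d c z < epn j).
  { intros j. destruct (HZ X (fun c z => d c z < epn j)) as [l Hl].
    - intros c. apply ball_open; auto.
    - intros x Zx. exists x. rewrite d_refl by auto. apply epn_pos.
    - exists l. auto. }
  destruct (functional_choice _ Hnet) as [net Hnet'].
  set (T := fun j c k => meets d A (epn j) c k).
  set (stable := fun (P' : nat -> Prop) j => forall c, In c (net j) ->
          (forall k, P' k -> T j c k) \/ (forall k, P' k -> ~ T j c k)).
  assert (Href : forall pj : (nat -> Prop) * nat, exists P', (forall k, P' k -> fst pj k) /\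
             (inf (fst pj) -> inf P' /\ stable P' (snd pj))).
  { intros [P0 j]. simpl. destruct (classic (inf P0)) as [HP0|HnP0].
    - destruct (stab_list (T j) (net j) P0 HP0) as [P' [H1 [H2 H3]]].
      exists P'. auto.
    - exists P0. split; auto. tauto. }
  destruct (functional_choice _ Href) as [rf Hrf].
  pose (Pc := fix F (j : nat) : nat -> Prop := match j with
      | O => rf (P, O) | S j' => rf (F j', S j') end).
  assert (HPc : forall j, (forall k, Pc j k -> P k) /\ inf (Pc j) /\ stable (Pc j) j /\
                   forall k, Pc (S j) k -> Pc j k).
  { induction j as [|j [IH1 [IH2 [IH3 IH4]]]].
    - simpl. destruct (Hrf (P, O)) as [Ha Hb]. simpl in *. destruct (Hb HP).
      destruct (Hrf (rf (P, O), 1%nat)) as [Hc Hd']. simpl in *.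
      repeat split; auto.
    - destruct (Hrf (Pc j, S j)) as [Ha Hb]. simpl in Ha, Hb. destruct (Hb IH2) as [Hi Hs].
      destruct (Hrf (Pc (S j), S (S j))) as [Hc Hd']. simpl in Hc.
      repeat split; auto. }
  assert (HPc0 : forall j k, Pc j k -> Pc O k).
  { induction j; intros k Hk; auto. apply IHj. apply (HPc j). auto. }
  destruct (extract (Pc O) (fun j k => Pc j k)) as [Q [HQ1 [HQ2 HQ3]]].
  - intros j N. destruct (proj1 (proj2 (HPc j)) N) as [k [Hk Pk]]. exists k.
    split; auto. split; auto. apply (HPc0 j); auto.
  - intros j k H. apply (HPc j). auto.
  - exists Q. split. intros k Qk. apply (HPc O). auto. split; auto.
    intros w Hw e He. destruct (epn_small (e/3) ltac:(lra)) as [j Hj].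
    destruct (HQ3 j) as [N HN].
    destruct (Hw (epn j) (epn_pos j) N) as [k0 [Hk0 [Qk0 [a [Aa Ha]]]]].
    assert (Za : Z a). { apply (HA k0); auto. apply (HPc O), HQ1, Qk0. }
    destruct (Hnet' j a Za) as [c [Hc Hca]].
    assert (T0 : T j c k0). { exists a. split; auto. }
    destruct (proj1 (proj2 (proj2 (HPc j))) c Hc) as [Hall|Hnone].
    + exists N. intros k Hk Qk. destruct (Hall k (HN k Hk Qk)) as [a' [Aa' Ha']].
      exists a'. split; auto. pose proof (d_tri d Hd w a c). pose proof (d_tri d Hd w c a').
      rewrite (d_sym d Hd a c) in H. lra.
    + exfalso. apply (Hnone k0); auto.
Qed.

End Met3.

Section CO.
Context {X Y M : Type} (d : X -> X -> R) (dY : Y -> Y -> R) (rho : M -> M -> R)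
  (Hd : is_metric d) (HdY : is_metric dY) (Hrho : is_metric rho).

Lemma CO_ball Z (g h : X -> M) e : compact_in d Z -> continuous_map d rho g ->
  continuous_map d rho h -> (forall x, Z x -> rho (h x) (g x) < e) ->
  exists l : list ((X -> Prop) * (M -> Prop)),
    (forall p, In p l -> compact_in d (fst p) /\ open_in rho (snd p) /\
                         forall x, fst p x -> snd p (h x)) /\
    forall h', continuous_map d rho h' ->
      (forall p, In p l -> forall x, fst p x -> snd p (h' x)) ->
      forall x, Z x -> rho (h' x) (g x) < e.
Proof.
  intros HZ Hg Hh Hhg.
  assert (Hr : forall x, exists r, Z x -> 0 < r /\ forall z, d x z < r ->
      rho (h x) (h z) < (e - rho (h x) (g x)) / 3 /\ rho (g x) (g z) < (e - rho (h x) (g x)) / 3).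
  { intros x. destruct (classic (Z x)) as [Zx|nZ]; [|exists 1; tauto].
    specialize (Hhg x Zx).
    destruct (Hh x ((e - rho (h x) (g x)) / 3) ltac:(lra)) as [d1 [Hd1 H1]].
    destruct (Hg x ((e - rho (h x) (g x)) / 3) ltac:(lra)) as [d2 [Hd2 H2]].
    exists (Rmin d1 d2). intros _. split. apply Rmin_glb_lt; auto.
    intros z Hz. split. apply H1. pose proof (Rmin_l d1 d2). lra.
    apply H2. pose proof (Rmin_r d1 d2). lra. }
  destruct (functional_choice _ Hr) as [r Hr'].
  destruct (HZ X (fun x z => Z x /\ d x z < r x / 2)) as [lx Hlx].
  - intros x z [Zx Hz]. destruct (ball_open d Hd x (r x / 2) z Hz) as [t [Ht Hb]].
    exists t. split; auto.
  - intros x Zx. exists x. split; auto. rewrite d_refl by auto. destruct (Hr' x Zx). lra.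
  - exists (map (fun x => ((fun z => Z x /\ Z z /\ d x z <= r x / 2),
                (fun m => rho (h x) m < (e - rho (h x) (g x)) / 3))) lx).
    split.
    + intros p Hp. apply in_map_iff in Hp as [x [<- Hx]]. simpl. split; [|split].
      * apply (compact_ext d (fun z => Z z /\ (Z x /\ d x z <= r x / 2))).
        { intros z. tauto. }
        apply compact_closed_sub; auto.
        intros z Hn. destruct (classic (Z x)) as [Zx|nZ].
        -- assert (Hn' : r x / 2 < d x z). { apply Rnot_le_lt. intros Hle. apply Hn. auto. }
           exists (d x z - r x / 2). split. lra.
           intros w Hw [_ Hw']. apply Hn. split; auto. pose proof (d_tri d Hd x w z).
           rewrite (d_sym d Hd w z) in H. lra.
        -- exists 1. split. lra. intros w _ [? _]. auto.
      * apply ball_open; auto.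
      * intros z [Zx [Zz Hz]]. destruct (Hr' x Zx) as [Hrx Hb]. apply Hb. lra.
    + intros h' Hh' Hl z Zz. destruct (Hlx z Zz) as [x [Hin [Zx Hxz]]].
      assert (Hp := Hl _ (in_map _ _ _ Hin) z). simpl in Hp.
      assert (Hle : d x z <= r x / 2) by lra.
      specialize (Hp (conj Zx (conj Zz Hle))).
      destruct (Hr' x Zx) as [Hrx Hb]. destruct (Hb z ltac:(lra)) as [_ Hgz].
      pose proof (d_tri rho Hrho (h' z) (h x) (g z)).
      pose proof (d_tri rho Hrho (h x) (g x) (g z)).
      rewrite (d_sym rho Hrho (h' z) (h x)) in H. pose proof (Hhg x Zx). lra.
Qed.

Lemma CO_cluster Z (K : (X -> M) -> Prop) (G : nat -> X -> M) :
  compact_in d Z -> CO_compact d rho K -> (forall k, K (G k)) ->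
  exists g, K g /\ forall e, 0 < e -> fr (fun _ => True) (fun k => forall x, Z x -> rho (G k x) (g x) < e).
Proof.
  intros HZ HK HG. apply NNPP. intros Hn.
  assert (H : forall g, exists p : R * nat, K g -> 0 < fst p /\
     forall k, (snd p <= k)%nat -> ~ (forall x, Z x -> rho (G k x) (g x) < fst p)).
  { intros g. apply NNPP. intros Hc. apply Hn. exists g.
    assert (Kg : K g). { apply NNPP. intros nK. apply Hc. exists (1, O). tauto. }
    split; auto. intros e He N. apply NNPP. intros Hf. apply Hc. exists (e, N).
    intros _. split; auto. intros k Hk Hd'. apply Hf. exists k. auto. }
  destruct (functional_choice _ H) as [F HF].
  destruct (proj2 HK (X -> M) (fun g h => K g /\ forall x, Z x -> rho (h x) (g x) < fst (F g)))
    as [l Hl].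
  - intros g h Hh [Kg Hhg]. destruct (CO_ball Z g h (fst (F g)) HZ (proj1 HK g Kg) Hh Hhg)
      as [l [Hl1 Hl2]]. exists l. split; [auto|]. intros h' Hh' Hp. split; auto.
  - intros g Kg. exists g. split; auto. intros x _. rewrite d_refl by auto. apply (HF g Kg).
  - destruct (list_max (fun g => snd (F g)) l) as [N HN].
    destruct (Hl (G N) (HG N)) as [g [Hin [Kg Hg]]].
    apply (proj2 (HF g Kg) N); auto.
Qed.

Lemma perfect_Z (f : X -> Y) (y : nat -> Y) y0 : perfect_map d dY f ->
  (forall k, dY y0 (y k) < epn k) ->
  compact_in d (fun x => f x = y0 \/ exists k, f x = y k).
Proof.
  intros [Hfc [Hfcl Hfib]] Hy I U HU Hcov.
  destruct (Hfib y0 I U HU) as [l0 Hl0].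
  { intros x Hx. apply Hcov. auto. }
  set (O := fun z => exists i, In i l0 /\ U i z).
  assert (HO : open_in d O).
  { intros z [i [Hi Uz]]. destruct (HU i z Uz) as [r [Hr Hb]]. exists r. split; auto.
    intros w Hw. exists i. auto. }
  assert (Hcl : closed_in d (fun z => ~ O z)).
  { intros z Hz. apply NNPP in Hz. destruct (HO z Hz) as [r [Hr Hb]]. exists r. split; [auto|].
    intros w Hw Hn. apply Hn. auto. }
  destruct (Hfcl _ Hcl y0) as [r [Hr Hb]].
  { intros [x [Hx Hfx]]. apply Hx. apply Hl0. auto. }
  destruct (epn_small r Hr) as [K0 HK0].
  assert (Hfin : forall N, exists l, forall k, (k < N)%nat -> forall x, f x = y k ->
                    exists i, In i l /\ U i x).
  { induction N as [|N [l IH]].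
    - exists nil. intros k Hk. lia.
    - destruct (Hfib (y N) I U HU) as [lN HlN].
      { intros x Hx. apply Hcov. right. eauto. }
      exists (l ++ lN). intros k Hk x Hx. destruct (Nat.eq_dec k N) as [->|Hne].
      + destruct (HlN x Hx) as [i [? ?]]. exists i. split; auto. apply in_or_app. auto.
      + destruct (IH k ltac:(lia) x Hx) as [i [? ?]]. exists i. split; auto. apply in_or_app. auto. }
  destruct (Hfin K0) as [l Hl].
  exists (l0 ++ l). intros x [Hx|[k Hx]].
  - destruct (Hl0 x Hx) as [i [? ?]]. exists i. split; auto. apply in_or_app. auto.
  - destruct (le_lt_dec K0 k) as [Hle|Hlt].
    + assert (Ox : O x).
      { apply NNPP. intros nO. apply (Hb (y k)).
        - pose proof (epn_mono _ _ Hle). specialize (Hy k). lra.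
        - exists x. auto. }
      destruct Ox as [i [? ?]]. exists i. split; auto. apply in_or_app. auto.
    + destruct (Hl k Hlt x Hx) as [i [? ?]]. exists i. split; auto. apply in_or_app. auto.
Qed.

End CO.

Lemma zero_small r : 0 <= r -> (forall e, 0 < e -> r < e) -> r = 0.
Proof. intros H1 H2. destruct (Rle_lt_or_eq_dec 0 r H1); auto. specialize (H2 r r0). lra. Qed.

Section Fib.
Context {X Y : Type} (d : X -> X -> R) (dY : Y -> Y -> R)
  (Hd : is_metric d) (HdY : is_metric dY).

Lemma lim_fiber (f : X -> Y) (y : nat -> Y) y0 Q : continuous_map d dY f ->
  (forall k, dY y0 (y k) < epn k) -> forall w,
  (forall e, 0 < e -> fr Q (fun k => exists a, f a = y k /\ d w a < e)) -> f w = y0.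
Proof.
  intros Hf Hy w Hw. apply HdY. apply zero_small. apply HdY.
  intros e He. destruct (Hf w (e/2) ltac:(lra)) as [del [Hdel Hb]].
  destruct (epn_small (e/2) ltac:(lra)) as [j Hj].
  destruct (Hw del Hdel j) as [k [Hk [_ [a [Hfa Ha]]]]].
  specialize (Hb a Ha). rewrite Hfa in Hb. pose proof (epn_mono _ _ Hk).
  specialize (Hy k). pose proof (d_tri dY HdY (f w) (y k) y0).
  rewrite (d_sym dY HdY (y k) y0) in H0. lra.
Qed.
End Fib.

Theorem lemma2p5
  (X Y M : Type) (d : X -> X -> R) (dY : Y -> Y -> R) (rho : M -> M -> R)
  (Hd : is_metric d) (HdY : is_metric dY) (Hrho : is_metric rho)
  (Hcomplete : complete_metric rho)
  (f : X -> Y) (Hf : perfect_map d dY f)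
  (m n : nat) (Hm : (1 <= m)%nat) (Hn : (1 <= n)%nat)
  (g0 : X -> M) (Hg0 : continuous_map d rho g0)
  (eps : X -> R) (Heps_cont : continuous_map d (fun a b => Rabs (a - b)) eps)
  (Heps : forall x, 0 < eps x /\ eps x <= 1 / 64)
  (y0 : Y) (K : (X -> M) -> Prop)
  (HK : CO_compact d rho K)
  (HKsub : forall g, K g -> Phi d rho f m n g0 eps y0 g) :
  exists V : Y -> Prop, open_in dY V /\ V y0 /\
    forall y, V y -> forall g, K g -> Phi d rho f m n g0 eps y g.
Proof.
  apply NNPP. intros Hno.
  assert (Hseq : forall k, exists p : Y * (X -> M), dY y0 (fst p) < epn k /\ K (snd p) /\
                   ~ Phi d rho f m n g0 eps (fst p) (snd p)).
  { intros k. apply NNPP; intros Hk. apply Hno. exists (fun y => dY y0 y < epn k).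
    split. apply ball_open; auto. split. rewrite d_refl by auto. apply epn_pos.
    intros y Hy g Kg. apply NNPP; intro Hp. apply Hk. exists (y, g). auto. }
  destruct (functional_choice _ Hseq) as [yg Hyg].
  set (y := fun k => fst (yg k)). set (G := fun k => snd (yg k)).
  assert (Hy : forall k, dY y0 (y k) < epn k) by (intros k; apply Hyg).
  assert (HG : forall k, K (G k)) by (intros k; apply Hyg).
  assert (HnK : forall k, ~ Kset d rho f m n (y k) (G k)).
  { intros k HKs. apply (proj2 (proj2 (Hyg k))). split; auto. apply (HKsub (G k) (HG k)). }
  clearbody y G. clear Hyg yg Hseq.
  assert (HLs : forall k, exists L : X -> Prop, continuum_in d L /\ (forall x, L x -> f x = y k) /\
      diam_ge rho (G k) L (1 / INR n) /\ forall x, L x -> exists z,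
      Ccomp d f (G k) (y k) x z /\ forall a, L a -> ~ d z a < 1 / INR m).
  { intros k. apply NNPP; intro H. apply (HnK k). split. apply (proj1 HK), HG.
    intros L HL HLf HLd. apply NNPP; intros Hx. apply H. exists L. split; [auto|].
    split; [auto|]. split; [auto|]. intros x Lx. apply NNPP; intros Hz. apply Hx.
    exists x. split; [auto|]. intros z Hc. apply NNPP; intros Hnb. apply Hz.
    exists z. split; [auto|]. intros a La Hda. apply Hnb. exists a; auto. }
  destruct (functional_choice _ HLs) as [Ls HLs'].
  clear HLs HnK.
  assert (Hab : forall k, exists p : X * X, Ls k (fst p) /\ Ls k (snd p) /\
      1 / INR n - epn k < rho (G k (fst p)) (G k (snd p))).
  { intros k. destruct (HLs' k) as [_ [_ [Hdm _]]].
    destruct (Hdm (1 / INR n - epn k)) as [a [b [? [? ?]]]].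
    pose proof (epn_pos k). lra. exists (a, b). auto. }
  destruct (functional_choice _ Hab) as [ab Hab']. clear Hab.
  set (a := fun k => fst (ab k)). set (b := fun k => snd (ab k)).
  assert (Ha : forall k, Ls k (a k)) by (intros; apply Hab').
  assert (Hb : forall k, Ls k (b k)) by (intros; apply Hab').
  assert (Hab : forall k, 1 / INR n - epn k < rho (G k (a k)) (G k (b k))) by (intros; apply Hab').
  clearbody a b. clear Hab' ab.
  assert (HW : forall q : nat * X, exists z, Ls (fst q) (snd q) ->
      Ccomp d f (G (fst q)) (y (fst q)) (snd q) z /\ forall a, Ls (fst q) a -> ~ d z a < 1 / INR m).
  { intros [k x]. simpl. destruct (classic (Ls k x)) as [Lx|nL].
    - destruct (HLs' k) as [_ [_ [_ HW]]]. destruct (HW x Lx) as [z Hz]. exists z. auto.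
    - exists x. tauto. }
  destruct (functional_choice _ HW) as [Wf HWf]. clear HW.
  set (Z := fun x => f x = y0 \/ exists k, f x = y k).
  assert (HZ : compact_in d Z) by (apply perfect_Z with (dY := dY); auto).
  assert (HLZ : forall k, forall w, Ls k w -> Z w).
  { intros k w Hw. right. exists k. apply (HLs' k); auto. }
  destruct (CO_cluster d rho Hd Hrho Z K G HZ HK HG) as [g [Kg Hgfr]].
  destruct (extract (fun _ => True) (fun j k => forall x, Z x -> rho (G k x) (g x) < epn j))
    as [Q1 [_ [HQ1 HQ1u]]].
  { intros j. apply Hgfr, epn_pos. }
  { intros j k H x Zx. specialize (H x Zx). pose proof (epn_mono j (S j) ltac:(lia)). lra. }
  assert (Hunif1 : forall e, 0 < e -> ev Q1 (fun k => forall x, Z x -> rho (G k x) (g x) < e)).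
  { intros e He. destruct (epn_small e He) as [j Hj]. eapply ev_impl; [|apply (HQ1u j)].
    intros k _ H x Zx. specialize (H x Zx). lra. }
  clear HQ1u Hgfr.
  destruct (seq_conv d Hd Z Q1 a HZ HQ1) as [Q2 [HQ21 [HQ2 [a0 [Za0 Ha0]]]]].
  { intros k _. apply (HLZ k), Ha. }
  destruct (seq_conv d Hd Z Q2 b HZ HQ2) as [Q3 [HQ32 [HQ3 [b0 [Zb0 Hb0]]]]].
  { intros k _. apply (HLZ k), Hb. }
  destruct (kuratowski d Hd Z Q3 Ls HZ HQ3) as [Q4 [HQ43 [HQ4 Hlinf]]].
  { intros k _. apply HLZ. }
  assert (Hunif : forall e, 0 < e -> ev Q4 (fun k => forall x, Z x -> rho (G k x) (g x) < e)).
  { intros e He. apply (ev_sub Q1); auto. }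
  assert (Ha4 : forall e, 0 < e -> ev Q4 (fun k => d a0 (a k) < e)).
  { intros e He. apply (ev_sub Q2); auto. }
  assert (Hb4 : forall e, 0 < e -> ev Q4 (fun k => d b0 (b k) < e)).
  { intros e He. apply (ev_sub Q3); auto. }
  clear Hunif1 Ha0 Hb0.
  set (Llim := lims d Q4 Ls).
  assert (Hcont : forall k, Ls k <> Ls k -> False) by auto.
  assert (Hfc : continuous_map d dY f) by apply Hf.
  assert (LLa : forall e, 0 < e -> ev Q4 (meets d Ls e a0)).
  { intros e He. eapply ev_impl; [|apply (Ha4 e He)]. intros k _ H. exists (a k). auto. }
  assert (LLb : forall e, 0 < e -> ev Q4 (meets d Ls e b0)).
  { intros e He. eapply ev_impl; [|apply (Hb4 e He)]. intros k _ H. exists (b k). auto. }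
  assert (La0 : Llim a0) by (apply ev_lims; auto).
  assert (Lb0 : Llim b0) by (apply ev_lims; auto).
  assert (Lf : forall w, Llim w -> f w = y0).
  { intros w Hw. apply (lim_fiber d dY HdY f y y0 Q4 Hfc Hy w).
    intros e He. eapply fr_impl; [|apply (Hw e He)]. intros k _ [c [Lc Hc]].
    exists c. split; auto. apply (HLs' k); auto. }
  assert (Lconn : connected_in d Llim).
  { apply (lims_connected d Hd Z Q4 Ls HZ HQ4) with (p := a0).
    - intros k _ w. apply HLZ.
    - intros k _. apply (HLs' k).
    - exact LLa. }
  assert (Lcomp : compact_in d Llim).
  { apply (compact_ext d (fun z => f z = y0 /\ Llim z)).
    { intros z. split; [tauto|]. intros Hz; split; auto. }
    apply compact_closed_sub; auto. apply Hf. apply lims_closed; auto. }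
  assert (Hgc : continuous_map d rho g) by (apply (proj1 HK); auto).
  assert (Ldiam : diam_ge rho g Llim (1 / INR n)).
  { intros r' Hr'. exists a0, b0. split; [auto|]. split; [auto|].
    set (del := (1 / INR n - r') / 6).
    assert (Hdel : 0 < del) by (unfold del; lra).
    assert (Hdel6 : 6 * del = 1 / INR n - r') by (unfold del; lra).
    destruct (Hgc a0 del Hdel) as [ta [Hta Hga]].
    destruct (Hgc b0 del Hdel) as [tb [Htb Hgb]].
    destruct (epn_small del Hdel) as [j Hj].
    destruct (ev_fr _ _ HQ4 (ev_and _ _ _ (Hunif del Hdel) (ev_and _ _ _ (Ha4 ta Hta)
       (ev_and _ _ _ (Hb4 tb Htb) (ev_ge Q4 j)))) O) as [k [_ [Qk [Hu [Hak [Hbk Hjk]]]]]].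
    pose proof (Hu (a k) (HLZ k _ (Ha k))). pose proof (Hu (b k) (HLZ k _ (Hb k))).
    pose proof (Hga _ Hak). pose proof (Hgb _ Hbk). pose proof (Hab k).
    pose proof (epn_mono _ _ Hjk).
    pose proof (d_tri rho Hrho (G k (a k)) (g (a k)) (G k (b k))).
    pose proof (d_tri rho Hrho (g (a k)) (g a0) (G k (b k))).
    pose proof (d_tri rho Hrho (g a0) (g b0) (G k (b k))).
    pose proof (d_tri rho Hrho (g b0) (g (b k)) (G k (b k))).
    rewrite (d_sym rho Hrho (g (a k)) (g a0)) in *.
    rewrite (d_sym rho Hrho (g (b k)) (G k (b k))) in *.
    lra. }
  destruct (proj2 (proj1 (HKsub g Kg)) Llim (conj (ex_intro _ a0 La0) (conj Lcomp Lconn)) Lf Ldiam)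
    as [x [Lx Hx]].
  assert (HLne : forall k, Q4 k -> exists w, Ls k w).
  { intros k _. apply (HLs' k). }
  destruct (choose_seq d Q4 Ls x HLne (Hlinf x Lx)) as [xs [Hxs Hxc]].
  set (zs := fun k => Wf (k, xs k)).
  assert (Hzs : forall k, Q4 k -> Ccomp d f (G k) (y k) (xs k) (zs k) /\
                 forall a, Ls k a -> ~ d (zs k) a < 1 / INR m).
  { intros k Qk. exact (HWf (k, xs k) (Hxs k Qk)). }
  set (Cs := fun k w => Ccomp d f (G k) (y k) (xs k) w).
  assert (HCS : forall k w, Cs k w -> G k w = G k (xs k) /\ f w = y k).
  { intros k w [A [HA [_ [_ Aw]]]]. apply HA, Aw. }
  assert (HCZ : forall k, Q4 k -> forall w, Cs k w -> Z w).
  { intros k _ w Hw. right. exists k. apply (HCS k w Hw). }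
  assert (HCc : forall k, Q4 k -> connected_in d (Cs k)).
  { intros k _. exact (comp_connected d _ (xs k)). }
  assert (Hxm : forall e, 0 < e -> ev Q4 (meets d Cs e x)).
  { intros e He. eapply ev_impl; [|apply (Hxc e He)]. intros k Qk H. exists (xs k).
    split; auto. exists (fun w => w = xs k). split.
    - intros w ->. split; auto. apply (HLs' k). apply Hxs; auto.
    - split. apply single_connected. auto. }
  set (Clim := lims d Q4 Cs).
  assert (Cconn : connected_in d Clim).
  { apply (lims_connected d Hd Z Q4 Cs HZ HQ4) with (p := x); auto. }
  assert (Cx : Clim x) by (apply ev_lims; auto).
  assert (Cfib : forall w, Clim w -> g w = g x /\ f w = y0).
  { intros w Hw. split.
    - apply Hrho. apply zero_small; [apply Hrho|]. intros e He.
      set (del := e / 4). assert (Hdel : 0 < del) by (unfold del; lra).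
      destruct (Hgc w del Hdel) as [t [Ht Hgw]].
      destruct (Hgc x del Hdel) as [t' [Ht' Hgx]].
      destruct (fr_ev _ _ _ (Hw t Ht) (ev_and _ _ _ (Hunif del Hdel) (Hxc t' Ht')) O)
        as [k [_ [Qk [[c [Cc Hc]] [Hu Hxk]]]]].
      destruct (HCS k c Cc) as [HGc _].
      pose proof (Hgw c Hc). pose proof (Hgx _ Hxk).
      pose proof (Hu c (HCZ k Qk c Cc)). pose proof (Hu (xs k) (HLZ k _ (Hxs k Qk))).
      rewrite HGc in H1.
      pose proof (d_tri rho Hrho (g w) (g c) (g x)).
      pose proof (d_tri rho Hrho (g c) (G k (xs k)) (g x)).
      pose proof (d_tri rho Hrho (G k (xs k)) (g (xs k)) (g x)).
      rewrite (d_sym rho Hrho (g c) (G k (xs k))) in H4.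
      rewrite (d_sym rho Hrho (g (xs k)) (g x)) in H5.
      assert (He4 : 4 * del = e) by (unfold del; lra). lra.
    - apply (lim_fiber d dY HdY f y y0 Q4 Hfc Hy w).
      intros e He. eapply fr_impl; [|apply (Hw e He)]. intros k _ [c [Cc Hc]].
      exists c. split; auto. apply (HCS k c Cc). }
  destruct (cluster d Hd Z Q4 zs HZ HQ4) as [z0 [Zz0 Hz0]].
  { intros k Qk. apply (HCZ k Qk), (proj1 (Hzs k Qk)). }
  assert (Cz : Clim z0).
  { intros e He. eapply fr_impl; [|apply (Hz0 e He)]. intros k Qk H. exists (zs k).
    split; auto. apply (proj1 (Hzs k Qk)). }
  assert (Hcomp : Ccomp d f g y0 x z0).
  { exists Clim. split; [|auto]. intros w Hw. apply Cfib, Hw. }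
  destruct (Hx z0 Hcomp) as [l [Ll Hlz]].
  set (e := (1 / INR m - d z0 l) / 2). assert (He : 0 < e) by (unfold e; lra).
  destruct (fr_ev _ _ _ (Hz0 e He) (Hlinf l Ll e He) O) as [k [_ [Qk [Hzk [l' [Ll' Hl']]]]]].
  apply (proj2 (Hzs k Qk) l' Ll').
  pose proof (d_tri d Hd (zs k) z0 l'). pose proof (d_tri d Hd z0 l l').
  rewrite (d_sym d Hd (zs k) z0) in H.
  assert (He2 : 2 * e = 1 / INR m - d z0 l) by (unfold e; lra). lra.
Qed.
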